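(* Let $n>s+1$, let $(p_{ij})_{i\neq j}$ be a probability distribution on $\mathcal{P}_n$ with $p_{ij}=p_{ji}>0$ for all $i\neq j$, let $Y_0\in(\mathbb{R}^s)^n$ be arbitrary, and let $Y(t)$ be the solution of the gradient flow of relative entropy with $Y(0)=Y_0$. (i) If $\beta(x)=(1+x)^{-1}$, then there is a uniform constant $C$ such that $\operatorname{diam} Y(t)\le C\,t^{1/4}$ for all $t\ge 1$. (ii) If $\beta(x)=e^{-x}$, then there is a uniform constant $C$ such that $\operatorname{diam} Y(t)\le C$ for all $t\ge 0$.
   Context: Standing setup. Fix integers $s\ge 1$ and $n>s+1$. Let $\mathcal{P}_n=\{(i,j): i,j\in\{1,\dots,n\},\ i\neq j\}$. Let $(p_{ij})_{i\neq j}$ be a probability distribution on $\mathcal{P}_n$ (so $\sum_{i\neq j}p_{ij}=1$) with $p_{ij}=p_{ji}>0$ for all $i\neq j$. Let $\beta:[0,\infty)\to(0,\infty)$ be a smooth decreasing function with $\sup_{x\ge 0}|(\log\beta)'(x)|<\infty$. For points $Y=(y_1,\dots,y_n)$ with $y_i\in\mathbb{R}^s$ define $q_{ij}=\beta(|y_i-y_j|^2)/\sum_{k\neq \ell}\beta(|y_k-y_\ell|^2)$ for $i\neq j$, and the relative entropy $\mathcal{C}(Y)=\sum_{i\neq j}p_{ij}\log(p_{ij}/q_{ij})$. The gradient flow of $\mathcal{C}$ is the ODE system $$\frac{dy_i}{dt}=4\sum_{j\neq i}(p_{ij}-q_{ij})(y_i-y_j)(\log\beta)'(|y_i-y_j|^2),\qquad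 i=1,\dots,n,$$ which, for any initial data $Y_0=Y(0)\in(\mathbb{R}^s)^n$, has a solution $Y(t)=(y_1(t),\dots,y_n(t))$ for all $t\ge0$. $\operatorname{diam}Y=\max_{i,j}|y_i-y_j|$. A constant is ''uniform'' if it is independent of $t$ (it may depend on $n,s,Y_0,(p_{ij}),\beta$). *)

(* Defs.v *)
From HB Require Import structures.
From mathcomp Require Import all_boot all_order all_algebra.
From mathcomp Require Import all_classical all_reals all_analysis.
Set Implicit Arguments. Unset Strict Implicit. Unset Printing Implicit Defensive.
Import Order.TTheory GRing.Theory Num.Theory.
Import numFieldNormedType.Exports.
Local Open Scope ring_scope.
Local Open Scope classical_set_scope.

Section Defs.
Variable R : realType.

(* A configuration Y = (y_1,...,y_n), y_i in R^s, as a function 'I_n -> 'I_s -> R. *)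

Definition dist2 (n s : nat) (Y : 'I_n -> 'I_s -> R) (i j : 'I_n) : R :=
  \sum_(k < s) (Y i k - Y j k) ^+ 2.

Definition diam (n s : nat) (Y : 'I_n -> 'I_s -> R) : R :=
  \big[Num.max/0]_(i < n) \big[Num.max/0]_(j < n) Num.sqrt (dist2 Y i j).

Definition qq (beta : R -> R) (n s : nat) (Y : 'I_n -> 'I_s -> R) (i j : 'I_n) : R :=
  beta (dist2 Y i j) /
  (\sum_(k < n) \sum_(l < n | l != k) beta (dist2 Y k l)).

(* (p_ij)_{i<>j}: symmetric, positive probability distribution on P_n
   (diagonal values p i i are irrelevant and unused). *)
Definition prob_on_pairs (n : nat) (p : 'I_n -> 'I_n -> R) : Prop :=
  (forall i j : 'I_n, i != j -> 0 < p i j) /\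
  (forall i j : 'I_n, i != j -> p i j = p j i) /\
  (\sum_(i < n) \sum_(j < n | j != i) p i j = 1).

Definition flow_rhs (beta : R -> R) (n s : nat) (p : 'I_n -> 'I_n -> R)
  (Y : 'I_n -> 'I_s -> R) (i : 'I_n) (k : 'I_s) : R :=
  4 * \sum_(j < n | j != i)
        (p i j - qq beta Y i j) * (Y i k - Y j k) *
        derive1 (fun x => ln (beta x)) (dist2 Y i j).

Definition is_flow_solution (beta : R -> R) (n s : nat) (p : 'I_n -> 'I_n -> R)
  (Y0 : 'I_n -> 'I_s -> R) (Y : R -> 'I_n -> 'I_s -> R) : Prop :=
  (forall i k, Y 0 i k = Y0 i k) /\
  (forall i k, (fun t : R => Y t i k) @ (0:R)^'+ --> Y0 i k) /\
  (forall t : R, 0 < t -> forall i k,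
     is_derive t 1 (fun u => Y u i k) (flow_rhs beta p (Y t) i k)).

Definition beta_t (x : R) : R := (1 + x)^-1.
Definition beta_g (x : R) : R := expR (- x).

End Defs.

(* Main.v *)
Require Import Defs.
From HB Require Import structures.
From mathcomp Require Import all_boot all_order all_algebra.
From mathcomp Require Import all_classical all_reals all_analysis.
Import Order.TTheory GRing.Theory Num.Theory.
Import numFieldNormedType.Exports.
Local Open Scope ring_scope.
From mathcomp Require Import ring lra zify.


Section Basic.
Variable R : realType.

Lemma dist2_ge0 n s (Y : 'I_n -> 'I_s -> R) i j : 0 <= dist2 Y i j.
Proof. by rewrite /dist2; apply: sumr_ge0 => k _; exact: sqr_ge0. Qed.

Lemma dist2C n s (Y : 'I_n -> 'I_s -> R) i j : dist2 Y i j = dist2 Y j i.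
Proof. by apply: eq_bigr => k _; rewrite -sqrrN opprB. Qed.

Lemma dist2xx n s (Y : 'I_n -> 'I_s -> R) i : dist2 Y i i = 0.
Proof. by apply: big1 => k _; rewrite subrr expr0n. Qed.

Lemma diam_ub n s (Y : 'I_n -> 'I_s -> R) (B : R) : 0 <= B ->
  (forall i j, dist2 Y i j <= B) -> diam Y <= Num.sqrt B.
Proof.
move=> B0 hB; rewrite /diam.
elim/big_ind: _ => [|x y hx hy|i _]; first exact: sqrtr_ge0.
  by rewrite ge_max hx hy.
elim/big_ind: _ => [|x y hx hy|j _]; first exact: sqrtr_ge0.
  by rewrite ge_max hx hy.
exact: ler_wsqrtr.
Qed.

Lemma diam_lb n s (Y : 'I_n -> 'I_s -> R) i j :
  Num.sqrt (dist2 Y i j) <= diam Y.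
Proof.
rewrite /diam (bigD1 i) //= le_max; apply/orP; left.
by rewrite (bigD1 j) //= le_max lexx.
Qed.

Lemma diam_ge0 n s (Y : 'I_n -> 'I_s -> R) : 0 <= diam Y.
Proof.
rewrite /diam; elim/big_ind: _ => [//|x y hx hy|i _].
  by rewrite le_max hx.
elim/big_ind: _ => [//|x y hx hy|j _]; first by rewrite le_max hx.
exact: sqrtr_ge0.
Qed.

End Basic.
Arguments dist2_ge0 {R n s}.
Arguments dist2C {R n s}.
Arguments dist2xx {R n s}.
Arguments diam_ub {R n s}.
Arguments diam_lb {R n s}.
Arguments diam_ge0 {R n s}.


Section Geom.
Variable R : realType.

Lemma exists_ker (N s : nat) (A : 'M[R]_(N, s)) : (s < N)%N ->
  exists x : 'rV[R]_N, x != 0 /\ x *m A = 0.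
Proof.
move=> sN.
have hK : kermx A != 0.
  rewrite -mxrank_eq0 mxrank_ker; have := rank_leq_col A; lia.
have [i hi] : exists i, row i (kermx A) != 0.
  apply/existsP; rewrite -negb_forall; apply: contra hK => /forallP h.
  by apply/eqP/row_matrixP => i; rewrite row0; apply/eqP/h.
by exists (row i (kermx A)); split => //; rewrite -row_mul mulmx_ker row0.
Qed.

Lemma sum_delta (N : nat) (f : 'I_N -> R) i : \sum_j f j * (i == j)%:R = f i.
Proof.
rewrite (bigD1 i) //= eqxx mulr1 big1 ?addr0 // => j ji.
by rewrite eq_sym (negbTE ji) mulr0.
Qed.

Lemma geom (n s : nat) (z : 'I_n -> 'I_s -> R) (M : R) :
  (s.+1 < n)%N -> 0 <= M ->
  (forall a b k l, a != b -> k != l -> dist2 z a b <= dist2 z k l + M) ->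
  forall a b, dist2 z a b <= 4 * M * (s.+1)%:R + M.
Proof.
move=> sn M0 hM.
have n0 : (0 < n)%N by lia.
pose o : 'I_n := Ordinal n0.
have eP (i : 'I_s.+1) : (i.+1 < n)%N by have := ltn_ord i; lia.
pose e (i : 'I_s.+1) : 'I_n := Ordinal (eP i).
have eo i : e i != o by apply/eqP => /(congr1 val).
have einj i j : i != j -> e i != e j.
  by move=> ij; apply/eqP => /(congr1 val) /= [] /val_inj /eqP; apply/negP.
pose v i k := z (e i) k - z o k.
pose A := \matrix_(i < s.+1, k < s) v i k.
have [x [xn0 xA]] := @exists_ker s.+1 s A (ltnSn s).
have hx k : \sum_i x 0 i * v i k = 0.
  transitivity ((x *m A) 0 k); last by rewrite xA mxE.
  by rewrite mxE; apply: eq_bigr => i _; rewrite mxE.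
pose G i j := \sum_k v i k * v j k.
have Gsum : \sum_i \sum_j x 0 i * x 0 j * G i j = 0.
  transitivity (\sum_k (\sum_i x 0 i * v i k) ^+ 2); last first.
    by apply: big1 => k _; rewrite hx expr0n.
  symmetry.
  under eq_bigr => k _ do rewrite expr2 mulr_suml.
  rewrite exchange_big; apply: eq_bigr => i _ /=.
  under eq_bigr => k _ do rewrite mulr_sumr.
  rewrite exchange_big; apply: eq_bigr => j _ /=.
  rewrite /G mulr_sumr; apply: eq_bigr => k _; ring.
pose m := dist2 z o (e ord0).
have m0 : 0 <= m by exact: dist2_ge0.
have hup a b : a != b -> dist2 z a b <= m + M.
  by move=> ab; apply: hM => //; rewrite eq_sym eo.
have hlo a b : a != b -> m <= dist2 z a b + M.
  by move=> ab; apply: hM => //; rewrite eq_sym eo.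
clearbody m.
have Gii i : G i i = dist2 z (e i) o.
  by apply: eq_bigr => k _; rewrite expr2.
have Gij i j : 2 * G i j = G i i + G j j - dist2 z (e i) (e j).
  rewrite /G /dist2 mulr_sumr -big_split -sumrB /=; apply: eq_bigr => k _.
  rewrite /v; ring.
pose T (i j : 'I_s.+1) : R := m / 2 * (1 + (i == j)%:R).
have GT i j : `|G i j - T i j| <= 2 * M.
  have [->|ij] := eqVneq i j.
    have -> : T j j = m by rewrite /T eqxx /=; field.
    rewrite Gii.
    have h1 := hup _ _ (eo j); have h2 := hlo _ _ (eo j).
    rewrite ler_norml; apply/andP; split; lra.
  rewrite /T (negbTE ij) addr0 mulr1.
  have h1 := hup _ _ (eo i); have h2 := hlo _ _ (eo i).
  have h3 := hup _ _ (eo j); have h4 := hlo _ _ (eo j).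
  have h5 := hup _ _ (einj _ _ ij); have h6 := hlo _ _ (einj _ _ ij).
  have h7 := Gij i j; rewrite !Gii in h7.
  rewrite ler_norml; apply/andP; split; lra.
pose S2 := \sum_i x 0 i ^+ 2.
have S2pos : 0 < S2.
  have [i hi] : exists i, x 0 i != 0.
    apply/existsP; rewrite -negb_forall; apply: contra xn0 => /forallP h.
    by apply/eqP/rowP => i; rewrite mxE; apply/eqP/h.
  rewrite /S2 (bigD1 i) //=; apply: ltr_pwDl; first by rewrite lt_def sqr_ge0 andbT sqrf_eq0.
  by apply: sumr_ge0 => j _; exact: sqr_ge0.
have low : \sum_i \sum_j x 0 i * x 0 j * G i j >=
   \sum_i \sum_j (x 0 i * x 0 j * T i j - 2 * M * (x 0 i ^+ 2 + x 0 j ^+ 2) / 2).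
  apply: ler_sum => i _; apply: ler_sum => j _.
  have h := GT i j.
  have e1 : x 0 i * x 0 j * G i j = x 0 i * x 0 j * T i j + x 0 i * x 0 j * (G i j - T i j) by ring.
  rewrite e1 lerD2l.
  have h2 : `|x 0 i * x 0 j * (G i j - T i j)| <= 2 * M * (x 0 i ^+ 2 + x 0 j ^+ 2) / 2.
    rewrite normrM; apply: le_trans (ler_wpM2l _ h) _; first exact: normr_ge0.
    rewrite normrM.
    have : 2 * (`|x 0 i| * `|x 0 j|) <= x 0 i ^+ 2 + x 0 j ^+ 2.
      rewrite -[x 0 i ^+ 2]real_normK ?num_real // -[x 0 j ^+ 2]real_normK ?num_real //.
      have := sqr_ge0 (`|x 0 i| - `|x 0 j|); nra.
    nra.
  rewrite -lerN2 opprK; apply: le_trans _ h2; rewrite -normrN; exact: ler_norm.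
have e2a : \sum_i \sum_j x 0 i * x 0 j * T i j = m / 2 * (\sum_i x 0 i) ^+ 2 + m / 2 * S2.
  transitivity (\sum_i \sum_j (m / 2 * (x 0 i * x 0 j) + m / 2 * (x 0 i * x 0 j) * (i == j)%:R)).
    by apply: eq_bigr => i _; apply: eq_bigr => j _; rewrite /T; ring.
  rewrite expr2 mulr_suml.
  rewrite (eq_bigr (fun i => \sum_j m / 2 * (x 0 i * x 0 j) + m / 2 * (x 0 i * x 0 i))); last first.
    move=> i _; rewrite big_split /=; congr (_ + _).
    exact: (sum_delta _ (fun j => m / 2 * (x 0 i * x 0 j))).
  rewrite big_split /= /S2 !mulr_sumr; congr (_ + _); apply: eq_bigr => i _.
    by rewrite !mulr_sumr; apply: eq_bigr => j _; ring.
have e2 : \sum_i \sum_j (x 0 i * x 0 j * T i j - 2 * M * (x 0 i ^+ 2 + x 0 j ^+ 2) / 2)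
   = m / 2 * (\sum_i x 0 i) ^+ 2 + m / 2 * S2 - 2 * M * (s.+1)%:R * S2.
  under eq_bigr => i _ do rewrite sumrB.
  rewrite sumrB e2a; congr (_ - _).
  transitivity (\sum_i \sum_j (M * x 0 i ^+ 2 + M * x 0 j ^+ 2)).
    by apply: eq_bigr => i _; apply: eq_bigr => j _; field.
  under eq_bigr => i _ do rewrite big_split /=.
  rewrite big_split /= exchange_big /=.
  rewrite !sumr_const !card_ord -mulr_sumr /S2 -mulrnDl -mulr_natr; ring.
rewrite Gsum e2 in low.
have hK : 0 <= M * (s.+1)%:R by apply: mulr_ge0.
have mb : m <= 4 * M * (s.+1)%:R.
  have hsq : 0 <= (\sum_i x 0 i) ^+ 2 by exact: sqr_ge0.
  have h0 : 0 <= m / 2 * (\sum_i x 0 i) ^+ 2 by apply: mulr_ge0 => //; lra.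
  have : (m / 2 - 2 * (M * (s.+1)%:R)) * S2 <= 0.
    have -> : (m / 2 - 2 * (M * (s.+1)%:R)) * S2 =
      (m / 2 * (\sum_i x 0 i) ^+ 2 + m / 2 * S2 - 2 * M * (s.+1)%:R * S2)
       - m / 2 * (\sum_i x 0 i) ^+ 2 by ring.
    by rewrite subr_le0; exact: le_trans low h0.
  rewrite pmulr_lle0 // => h.
  have -> : 4 * M * (s.+1)%:R = 4 * (M * (s.+1)%:R) by ring.
  move: h hK; generalize (M * (s.+1)%:R) => K; lra.
have -> : 4 * M * (s.+1)%:R + M = 4 * (M * (s.+1)%:R) + M by ring.
move: mb; have -> : 4 * M * (s.+1)%:R = 4 * (M * (s.+1)%:R) by ring.
move=> mb.
move=> a b; have [->|ab] := eqVneq a b.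
  rewrite dist2xx; move: hK; generalize (M * (s.+1)%:R) => K; lra.
have := hup _ _ ab; lra.
Qed.

End Geom.


Set Implicit Arguments. Unset Strict Implicit.
Section Der.
Variable R : realType.
Implicit Types (f g : R -> R) (x : R).

Lemma dcst x (c : R) : is_derive x 1 (fun _ : R => c) 0.
Proof. exact: (is_derive_cst c). Qed.

Lemma did x : is_derive x 1 (fun u : R => u) 1.
Proof. exact: is_derive_id. Qed.

Lemma dadd f g x df dg : is_derive x 1 f df -> is_derive x 1 g dg ->
  is_derive x 1 (fun u => f u + g u) (df + dg).
Proof. by move=> hf hg; apply: (is_deriveD hf hg). Qed.

Lemma dopp f x df : is_derive x 1 f df -> is_derive x 1 (fun u => - f u) (- df).
Proof. by move=> hf; apply: (is_deriveN hf). Qed.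

Lemma dsub f g x df dg : is_derive x 1 f df -> is_derive x 1 g dg ->
  is_derive x 1 (fun u => f u - g u) (df - dg).
Proof. by move=> hf hg; apply: (is_deriveB hf hg). Qed.

Lemma dmul f g x df dg : is_derive x 1 f df -> is_derive x 1 g dg ->
  is_derive x 1 (fun u => f u * g u) (f x * dg + g x * df).
Proof. by move=> hf hg; apply: (is_deriveM hf hg). Qed.

Lemma dscal f x (c : R) df : is_derive x 1 f df ->
  is_derive x 1 (fun u => c * f u) (c * df).
Proof.
by move=> hf; have := dmul (dcst x c) hf; rewrite mulr0 addr0.
Qed.

Lemma dsq f x df : is_derive x 1 f df ->
  is_derive x 1 (fun u => f u ^+ 2) (2 * f x * df).
Proof.
move=> hf; have -> : (fun u => f u ^+ 2) = (fun u => f u * f u).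
  by apply: funext => u; rewrite expr2.
have := dmul hf hf; congr is_derive; rewrite -mulr2n mulr2n; ring.
Qed.

Lemma dcomp f g x a b : is_derive (g x) 1 f a -> is_derive x 1 g b ->
  is_derive x 1 (fun u => f (g u)) (a * b).
Proof. by move=> hf hg; exact: (is_derive1_comp hf hg). Qed.

Lemma dln f x df : 0 < f x -> is_derive x 1 f df ->
  is_derive x 1 (fun u => ln (f u)) (df / f x).
Proof.
move=> fx hf; have := dcomp (is_derive1_ln fx) hf; congr is_derive.
by rewrite mulrC.
Qed.

Lemma dsum_seq (T : eqType) (r : seq T) (P : pred T) (h : T -> R -> R) (dh : T -> R) x :
  (forall i, P i -> is_derive x 1 (h i) (dh i)) ->
  is_derive x 1 (fun u => \sum_(i <- r | P i) h i u) (\sum_(i <- r | P i) dh i).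
Proof.
move=> hd; elim: r => [|a r IH].
  have -> : (fun u => \sum_(i <- [::] | P i) h i u) = (fun _ => 0).
    by apply: funext => u; rewrite big_nil.
  by rewrite big_nil; exact: dcst.
have -> : (fun u => \sum_(i <- a :: r | P i) h i u) =
   (fun u => (if P a then h a u else 0) + \sum_(i <- r | P i) h i u).
  by apply: funext => u; rewrite big_cons; case: (P a) => //; rewrite add0r.
rewrite big_cons; case: (boolP (P a)) => Pa.
  exact: dadd (hd a Pa) IH.
by have := dadd (dcst x 0) IH; rewrite add0r.
Qed.

Lemma dsum (N : nat) (P : pred 'I_N) (h : 'I_N -> R -> R) (dh : 'I_N -> R) x :
  (forall i, P i -> is_derive x 1 (h i) (dh i)) ->
  is_derive x 1 (fun u => \sum_(i < N | P i) h i u) (\sum_(i < N | P i) dh i).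
Proof. exact: dsum_seq. Qed.

Lemma dbeta_g x : is_derive x 1 (@beta_g R) (beta_g x * -1).
Proof.
have -> : @beta_g R = (fun u => expR (- u)) by [].
apply: (dcomp (is_derive_expR _)); exact: is_deriveNid.
Qed.

Lemma dbeta_t x : 0 <= x -> is_derive x 1 (@beta_t R) (beta_t x * - beta_t x).
Proof.
move=> x0; have -> : @beta_t R = (fun u => (1 + u)^-1) by [].
have h : is_derive x 1 (fun u : R => 1 + u) 1.
  by have := dadd (dcst x 1) (did x); rewrite add0r.
have hx : 1 + x != 0 by rewrite gt_eqF // ltr_wpDr.
have := is_deriveV hx h; congr is_derive.
by rewrite /beta_t /GRing.scale /= mulr1 mulrN expr2 invfM.
Qed.

End Der.


Set Implicit Arguments. Unset Strict Implicit.

Section Alg.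
Variable R : realType.
Variable n : nat.
Variable a : 'I_n -> 'I_n -> R.
Hypothesis asym : forall i j, i != j -> a i j = a j i.

Lemma swap_sum (x w : 'I_n -> R) :
  \sum_i \sum_j a i j * (x i - x j) * w j = - \sum_i \sum_j a i j * (x i - x j) * w i.
Proof.
rewrite exchange_big /= -sumrN; apply: eq_bigr => i _.
rewrite -sumrN; apply: eq_bigr => j _.
have [->|ij] := eqVneq i j; first by rewrite !subrr !mulr0 mul0r oppr0.
by rewrite (asym ij); ring.
Qed.

Lemma sum_asym0 (x : 'I_n -> R) : \sum_i \sum_j a i j * (x i - x j) = 0.
Proof.
have h := swap_sum x (fun _ => 1).
have e : \sum_i \sum_j a i j * (x i - x j) * 1 = \sum_i \sum_j a i j * (x i - x j).
  by apply: eq_bigr => i _; apply: eq_bigr => j _; rewrite mulr1.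
rewrite e in h; move: h; set S := \sum_i _; move=> h.
lra.
Qed.

Lemma cross (x w : 'I_n -> R) :
  \sum_i \sum_j a i j * ((x i - x j) * (w i - w j)) =
  2 * \sum_i w i * \sum_j a i j * (x i - x j).
Proof.
transitivity (\sum_i \sum_j a i j * (x i - x j) * w i - \sum_i \sum_j a i j * (x i - x j) * w j).
  rewrite -sumrB; apply: eq_bigr => i _; rewrite -sumrB; apply: eq_bigr => j _; ring.
rewrite swap_sum opprK.
have -> : \sum_i \sum_j a i j * (x i - x j) * w i = \sum_i w i * \sum_j a i j * (x i - x j).
  by apply: eq_bigr => i _; rewrite mulr_sumr; apply: eq_bigr => j _; ring.
ring.
Qed.

Lemma T_coord (x : 'I_n -> R) :
  \sum_i \sum_j a i j * ((x i - x j) *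
     (4 * \sum_l a i l * (x i - x l) - 4 * \sum_l a j l * (x j - x l))) =
  8 * \sum_i (\sum_l a i l * (x i - x l)) ^+ 2.
Proof.
rewrite (cross x (fun i => 4 * \sum_l a i l * (x i - x l))) mulr_sumr mulr_sumr.
by apply: eq_bigr => i _; rewrite expr2; ring.
Qed.

End Alg.

Lemma V_coord (R : realType) (n : nat) (a : 'I_n -> 'I_n -> R)
  (asym : forall i j, i != j -> a i j = a j i) (x : 'I_n -> R) :
  \sum_i \sum_j ((x i - x j) *
     (4 * \sum_l a i l * (x i - x l) - 4 * \sum_l a j l * (x j - x l))) =
  4 * n%:R * \sum_i \sum_j a i j * (x i - x j) ^+ 2.
Proof.
pose u i := \sum_l a i l * (x i - x l).
have hu : \sum_i u i = 0 := sum_asym0 asym x.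
have hx : \sum_i \sum_j a i j * (x i - x j) ^+ 2 = 2 * \sum_i x i * u i.
  rewrite -(cross asym x x); apply: eq_bigr => i _; apply: eq_bigr => j _.
  by rewrite expr2.
have a1 : forall i j : 'I_n, i != j -> (fun _ _ => 1 : R) i j = (fun _ _ => 1 : R) j i by [].
have hc := cross a1 x (fun i => 4 * u i).
have e1 : \sum_i \sum_j ((x i - x j) * (4 * u i - 4 * u j)) =
   \sum_i \sum_j (fun _ _ => 1 : R) i j * ((x i - x j) * (4 * u i - 4 * u j)).
  by apply: eq_bigr => i _; apply: eq_bigr => j _; rewrite mul1r.
rewrite e1 hc hx.
have e2 : \sum_i 4 * u i * \sum_j (fun _ _ => 1 : R) i j * (x i - x j) =
   \sum_i (4 * n%:R * (x i * u i) - 4 * (\sum_j x j) * u i).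
  apply: eq_bigr => i _.
  have -> : \sum_j (fun _ _ => 1 : R) i j * (x i - x j) = n%:R * x i - \sum_j x j.
    have -> : n%:R * x i = \sum_(j < n) x i by rewrite sumr_const card_ord mulr_natl.
    by rewrite -sumrB; apply: eq_bigr => j _; rewrite mul1r.
  ring.
rewrite e2 sumrB -!mulr_sumr hu; ring.
Qed.

Lemma exch3 (R : realType) (n s : nat) (A : 'I_n -> 'I_n -> R)
  (F : 'I_n -> 'I_n -> 'I_s -> R) :
  \sum_i \sum_j A i j * (2 * \sum_k F i j k) =
  2 * \sum_k \sum_i \sum_j A i j * F i j k.
Proof.
transitivity (2 * \sum_i \sum_j \sum_k A i j * F i j k).
  rewrite mulr_sumr; apply: eq_bigr => i _; rewrite mulr_sumr; apply: eq_bigr => j _.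
  rewrite mulr_sumr mulr_sumr mulr_sumr; apply: eq_bigr => k _; ring.
congr (_ * _).
rewrite [RHS]exchange_big /=; apply: eq_bigr => i _.
by rewrite [RHS]exchange_big.
Qed.


Set Implicit Arguments. Unset Strict Implicit.

Definition Zs (R : realType) (beta : R -> R) n s (Y : 'I_n -> 'I_s -> R) : R :=
  \sum_(k < n) \sum_(l < n | l != k) beta (dist2 Y k l).
Definition aa (R : realType) (beta L : R -> R) n s (p : 'I_n -> 'I_n -> R)
  (Y : 'I_n -> 'I_s -> R) i j : R :=
  (p i j - qq beta Y i j) * L (dist2 Y i j).
Definition Fn (R : realType) (beta : R -> R) n s (p : 'I_n -> 'I_n -> R)
  (Y : 'I_n -> 'I_s -> R) : R :=
  \sum_i \sum_(j < n | j != i) p i j * (ln (Zs beta Y) - ln (beta (dist2 Y i j))).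
Definition Vs (R : realType) n s (Y : 'I_n -> 'I_s -> R) : R :=
  \sum_i \sum_j dist2 Y i j.

Section Static.
Variables (R : realType) (n s : nat) (p : 'I_n -> 'I_n -> R) (beta L : R -> R).
Hypothesis hn : (1 < n)%N.
Hypothesis hb0 : forall x : R, 0 <= x -> 0 < beta x.
Hypothesis hbd : forall x : R, 0 <= x -> is_derive x 1 beta (beta x * L x).
Hypothesis hp : prob_on_pairs p.
Implicit Type y : 'I_n -> 'I_s -> R.

Lemma Zterm y k l : l != k -> beta (dist2 y k l) <= Zs beta y.
Proof.
move=> lk; rewrite /Zs (bigD1 k) //= (bigD1 l) //= -addrA lerDl.
apply: addr_ge0; first by apply: sumr_ge0 => j _; apply/ltW/hb0/dist2_ge0.
by apply: sumr_ge0 => i _; apply: sumr_ge0 => j _; apply/ltW/hb0/dist2_ge0.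
Qed.

Lemma Zpos y : 0 < Zs beta y.
Proof.
have h0 : (0 < n)%N by lia.
pose k : 'I_n := Ordinal h0; pose l : 'I_n := Ordinal hn.
have lk : l != k by [].
exact: lt_le_trans (hb0 (dist2_ge0 y k l)) (Zterm y lk).
Qed.

Lemma qq_sum y : \sum_i \sum_(j < n | j != i) qq beta y i j = 1.
Proof.
rewrite /qq; under eq_bigr => i _ do rewrite -mulr_suml.
by rewrite -mulr_suml divff // gt_eqF // Zpos.
Qed.

Lemma qq_sym y i j : qq beta y i j = qq beta y j i.
Proof. by rewrite /qq dist2C. Qed.

Lemma aa_sym y i j : i != j -> aa beta L p y i j = aa beta L p y j i.
Proof.
move=> ij; rewrite /aa qq_sym dist2C; case: hp => _ [hs _]; by rewrite hs.
Qed.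

Lemma hL x : 0 <= x -> derive1 (fun x => ln (beta x)) x = L x.
Proof.
move=> x0; have h := dln (hb0 x0) (hbd x0).
rewrite derive1E (@derive_val _ _ _ _ _ _ _ h) mulrAC divff ?mul1r //.
by rewrite gt_eqF // hb0.
Qed.

Lemma flow_rhsE y i k :
  flow_rhs beta p y i k = 4 * \sum_j aa beta L p y i j * (y i k - y j k).
Proof.
rewrite /flow_rhs; congr (_ * _).
rewrite [RHS](bigD1 i) //= subrr mulr0 add0r; apply: eq_bigr => j _.
by rewrite hL ?dist2_ge0 /aa; ring.
Qed.

Definition Pinv := \sum_i \sum_(j < n | j != i) (p i j)^-1.

Lemma pair_bound y K : Fn beta p y <= K ->
  forall a b k l, b != a -> l != k ->
  ln (beta (dist2 y k l)) <= ln (beta (dist2 y a b)) + K * Pinv.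
Proof.
move=> hF a b k l ba lk.
case: hp => hp0 [hps hp1].
have Zp := Zpos y.
pose c i j := ln (Zs beta y) - ln (beta (dist2 y i j)).
have c0 i j : j != i -> 0 <= c i j.
  move=> ji; rewrite /c subr_ge0 ler_ln ?posrE ?hb0 ?dist2_ge0 //.
  exact: Zterm.
have pab : 0 < p a b by apply: hp0; rewrite eq_sym.
have Fge : p a b * c a b <= Fn beta p y.
  rewrite /Fn (bigD1 a) //= (bigD1 b) //= -addrA lerDl.
  apply: addr_ge0; first apply: sumr_ge0 => j /andP[ja _].
    by apply: mulr_ge0; [apply/ltW/hp0; rewrite eq_sym|exact: c0].
  apply: sumr_ge0 => i _; apply: sumr_ge0 => j ji.
  by apply: mulr_ge0; [apply/ltW/hp0; rewrite eq_sym|exact: c0].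
have K0 : 0 <= K.
  apply: le_trans hF; apply: le_trans Fge; apply: mulr_ge0; [exact: ltW|exact: c0].
have Pge : (p a b)^-1 <= Pinv.
  rewrite /Pinv (bigD1 a) //= (bigD1 b) //= -addrA lerDl.
  apply: addr_ge0; first apply: sumr_ge0 => j /andP[ja _].
    by rewrite invr_ge0; apply/ltW/hp0; rewrite eq_sym.
  apply: sumr_ge0 => i _; apply: sumr_ge0 => j ji.
  by rewrite invr_ge0; apply/ltW/hp0; rewrite eq_sym.
have cab : c a b <= K * Pinv.
  have h1 : c a b <= K / p a b by rewrite ler_pdivlMr // mulrC (le_trans Fge).
  by apply: le_trans h1 _; apply: ler_wpM2l.
have hkl : ln (beta (dist2 y k l)) <= ln (Zs beta y).
  by rewrite ler_ln ?posrE ?hb0 ?dist2_ge0 //; exact: Zterm.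
move: cab; rewrite /c; lra.
Qed.

End Static.


Set Implicit Arguments. Unset Strict Implicit.

Section Dyn.
Variables (R : realType) (n s : nat) (p : 'I_n -> 'I_n -> R) (beta L : R -> R).
Hypothesis hn : (1 < n)%N.
Hypothesis hb0 : forall x : R, 0 <= x -> 0 < beta x.
Hypothesis hbd : forall x : R, 0 <= x -> is_derive x 1 beta (beta x * L x).
Hypothesis hp : prob_on_pairs p.
Variable Y : R -> 'I_n -> 'I_s -> R.
Hypothesis hY : forall t : R, 0 < t -> forall i k,
  is_derive t 1 (fun u => Y u i k) (flow_rhs beta p (Y t) i k).

Definition gd (t : R) (i j : 'I_n) : R := 2 * \sum_k (Y t i k - Y t j k) * (flow_rhs beta p (Y t) i k - flow_rhs beta p (Y t) j k).

Lemma d_dist2 (t : R) (i j : 'I_n) : 0 < t -> is_derive t 1 (fun u => dist2 (Y u) i j) (gd t i j).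
Proof.
move=> t0; rewrite /dist2.
have h := dsum (P := xpredT) (h := fun k u => (Y u i k - Y u j k) ^+ 2)
  (fun k _ => dsq (dsub (hY t0 i k) (hY t0 j k))).
apply: (is_derive_eq h).
by rewrite /gd mulr_sumr; apply: eq_bigr => k _; ring.
Qed.

Definition dZ (t : R) : R := \sum_k \sum_(l < n | l != k)
  beta (dist2 (Y t) k l) * L (dist2 (Y t) k l) * gd t k l.

Lemma d_Z (t : R) : 0 < t -> is_derive t 1 (fun u => Zs beta (Y u)) (dZ t).
Proof.
move=> t0; rewrite /Zs /dZ.
apply: (dsum (h := fun k u => \sum_(l < n | l != k) beta (dist2 (Y u) k l))) => k _.
apply: (dsum (h := fun l u => beta (dist2 (Y u) k l))) => l _.
exact: (dcomp (f := beta) (g := fun u => dist2 (Y u) k l) (hbd (dist2_ge0 _ _ _)) (d_dist2 _ _ t0)).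
Qed.

Definition dF (t : R) : R := \sum_i \sum_(j < n | j != i) p i j *
  (dZ t / Zs beta (Y t) -
   beta (dist2 (Y t) i j) * L (dist2 (Y t) i j) * gd t i j / beta (dist2 (Y t) i j)).

Lemma d_F (t : R) : 0 < t -> is_derive t 1 (fun u => Fn beta p (Y u)) (dF t).
Proof.
move=> t0; rewrite /Fn /dF.
apply: (dsum (h := fun i u => \sum_(j < n | j != i) p i j *
   (ln (Zs beta (Y u)) - ln (beta (dist2 (Y u) i j))))) => i _.
apply: (dsum (h := fun j u => p i j *
   (ln (Zs beta (Y u)) - ln (beta (dist2 (Y u) i j))))) => j _.
apply: dscal; apply: dsub.
  exact: (dln (f := fun u => Zs beta (Y u)) (Zpos hn hb0 _) (d_Z t0)).
apply: (dln (f := fun u => beta (dist2 (Y u) i j)) (hb0 (dist2_ge0 _ _ _))).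
exact: (dcomp (f := beta) (g := fun u => dist2 (Y u) i j) (hbd (dist2_ge0 _ _ _)) (d_dist2 _ _ t0)).
Qed.

Let asymY (t : R) : forall i j : 'I_n, i != j ->
  aa beta L p (Y t) i j = aa beta L p (Y t) j i :=
  fun i j => @aa_sym _ _ _ p beta L hp (Y t) i j.

Lemma gd_diag (t : R) (i : 'I_n) : gd t i i = 0.
Proof. by rewrite /gd big1 ?mulr0 // => k _; rewrite subrr mul0r. Qed.

Lemma gdE (t : R) (i j : 'I_n) : gd t i j = 2 * \sum_k (Y t i k - Y t j k) *
   (4 * \sum_l aa beta L p (Y t) i l * (Y t i k - Y t l k) -
    4 * \sum_l aa beta L p (Y t) j l * (Y t j k - Y t l k)).
Proof. by rewrite /gd; congr (_ * _); apply: eq_bigr => k _; rewrite !(flow_rhsE p hb0 hbd). Qed.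

Lemma Tsum_ge0 (t : R) :
  0 <= \sum_i \sum_(j < n | j != i) aa beta L p (Y t) i j * gd t i j.
Proof.
have -> : \sum_i \sum_(j < n | j != i) aa beta L p (Y t) i j * gd t i j =
    \sum_i \sum_j aa beta L p (Y t) i j * gd t i j.
  apply: eq_bigr => i _; rewrite [RHS](bigD1 i) //= gd_diag mulr0 add0r.
  by [].
under eq_bigr => i _ do under eq_bigr => j _ do rewrite gdE.
rewrite exch3; apply: mulr_ge0 => //; apply: sumr_ge0 => k _.
rewrite (T_coord (asymY t) (fun i => Y t i k)).
by apply: mulr_ge0 => //; apply: sumr_ge0 => i _; exact: sqr_ge0.
Qed.

Lemma dF_eq (t : R) : dF t = - \sum_i \sum_(j < n | j != i) aa beta L p (Y t) i j * gd t i j.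
Proof.
case: hp => hp0 [hps hp1].
have Zp := Zpos hn hb0 (Y t).
rewrite /dF.
transitivity (\sum_i \sum_(j < n | j != i) (p i j * (dZ t / Zs beta (Y t)) -
    p i j * L (dist2 (Y t) i j) * gd t i j)).
  apply: eq_bigr => i _; apply: eq_bigr => j _.
  have b0 : beta (dist2 (Y t) i j) != 0 by rewrite gt_eqF // hb0 // dist2_ge0.
  by rewrite -(mulrA (beta _)) mulrAC mulfV // mul1r; ring.

under eq_bigr => i _ do rewrite sumrB.
rewrite sumrB.
have -> : \sum_i \sum_(j < n | j != i) p i j * (dZ t / Zs beta (Y t)) = dZ t / Zs beta (Y t).
  under eq_bigr => i _ do rewrite -mulr_suml.
  by rewrite -mulr_suml hp1 mul1r.
have -> : dZ t / Zs beta (Y t) = \sum_i \sum_(j < n | j != i) qq beta (Y t) i j *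
    L (dist2 (Y t) i j) * gd t i j.
  rewrite /dZ mulr_suml; apply: eq_bigr => i _; rewrite mulr_suml; apply: eq_bigr => j _.
  rewrite /qq -/(Zs beta (Y t)); ring.
rewrite -sumrB -sumrN; apply: eq_bigr => i _; rewrite -sumrB -sumrN; apply: eq_bigr => j _.
rewrite /aa; ring.
Qed.

Lemma dF_le0 (t : R) : dF t <= 0.
Proof. by rewrite dF_eq oppr_le0; exact: Tsum_ge0. Qed.

Definition dV (t : R) : R := \sum_i \sum_j gd t i j.

Lemma d_V (t : R) : 0 < t -> is_derive t 1 (fun u => Vs (Y u)) (dV t).
Proof.
move=> t0; rewrite /Vs /dV.
apply: (dsum (h := fun i u => \sum_j dist2 (Y u) i j)) => i _.
apply: (dsum (h := fun j u => dist2 (Y u) i j)) => j _.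
exact: d_dist2.
Qed.

Lemma dV_eq (t : R) : dV t = 8 * n%:R *
  \sum_i \sum_j aa beta L p (Y t) i j * dist2 (Y t) i j.
Proof.
rewrite /dV.
transitivity (\sum_i \sum_j (fun _ _ => 1 : R) i j * gd t i j).
  by apply: eq_bigr => i _; apply: eq_bigr => j _; rewrite mul1r.
under eq_bigr => i _ do under eq_bigr => j _ do rewrite gdE.
rewrite exch3.
transitivity (2 * \sum_k (4 * n%:R * \sum_i \sum_j aa beta L p (Y t) i j *
    (Y t i k - Y t j k) ^+ 2)).
  congr (_ * _); apply: eq_bigr => k _.
  rewrite -(V_coord (asymY t) (fun i => Y t i k)).
  by apply: eq_bigr => i _; apply: eq_bigr => j _; rewrite mul1r.
rewrite -mulr_sumr mulrA; congr (_ * _); first ring.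
rewrite exchange_big /=; apply: eq_bigr => i _; rewrite exchange_big /=.
apply: eq_bigr => j _; rewrite /dist2 mulr_sumr.
by [].
Qed.

End Dyn.


Set Implicit Arguments. Unset Strict Implicit.
Local Open Scope classical_set_scope.

Section Tools.
Variable R : realType.

Lemma mvt_le (f df : R -> R) (a b K : R) : 0 < a -> a <= b ->
  (forall t, a <= t -> t <= b -> is_derive t 1 f (df t)) ->
  (forall t, a <= t -> t <= b -> df t <= K) -> f b - f a <= K * (b - a).
Proof.
move=> a0 ab hd hK.
have cont : {within `[a, b], continuous f}.
  apply: derivable_within_continuous => t; rewrite in_itv /= => /andP[h1 h2].
  exact: (@ex_derive _ _ _ _ _ _ _ (hd t h1 h2)).
have hd' : forall t, t \in `]a, b[%R -> is_derive t 1 f (df t).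
  by move=> t; rewrite in_itv /= => /andP[h1 h2]; apply: hd; apply: ltW.
have [c cin ->] := MVT_segment ab hd' cont.
move: cin; rewrite in_itv /= => /andP[h1 h2].
by apply: ler_wpM2r; [rewrite subr_ge0|exact: hK].
Qed.

Lemma cvg_sum_seq (T : Type) (F : set_system T) (FF : Filter F) (I : eqType) (r : seq I)
  (P : pred I) (h : I -> T -> R) (l : I -> R) :
  (forall i, P i -> h i @ F --> l i) ->
  (fun t => \sum_(i <- r | P i) h i t) @ F --> \sum_(i <- r | P i) l i.
Proof.
move=> hc; elim: r => [|a r IH].
  have -> : (fun t => \sum_(i <- [::] | P i) h i t) = (fun _ => 0).
    by apply: funext => u; rewrite big_nil.
  by rewrite big_nil; exact: cvg_cst.
have -> : (fun t => \sum_(i <- a :: r | P i) h i t) =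
   (fun t => (if P a then h a t else 0) + \sum_(i <- r | P i) h i t).
  by apply: funext => u; rewrite big_cons; case: (P a) => //; rewrite add0r.
rewrite big_cons; case: (boolP (P a)) => Pa.
  exact: cvgD (hc a Pa) IH.
by rewrite -[X in _ --> X]add0r; apply: cvgD => //; exact: cvg_cst.
Qed.

Lemma cvg_sum_ord (T : Type) (F : set_system T) (FF : Filter F) (N : nat)
  (P : pred 'I_N) (h : 'I_N -> T -> R) (l : 'I_N -> R) :
  (forall i, P i -> h i @ F --> l i) ->
  (fun t => \sum_(i < N | P i) h i t) @ F --> \sum_(i < N | P i) l i.
Proof. exact: cvg_sum_seq. Qed.

Lemma cont_of_derive (f : R -> R) (x d : R) : is_derive x 1 f d -> {for x, continuous f}.
Proof.
move=> h; apply: differentiable_continuous; apply/derivable1_diffP.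
exact: (@ex_derive _ _ _ _ _ _ _ h).
Qed.

End Tools.
Arguments cvg_sum_ord [R T F FF N P] h [l].

Section Tools2.
Variable R : realType.
Lemma cvg_dist2 (T : Type) (F : set_system T) (FF : Filter F) n s
  (Y : T -> 'I_n -> 'I_s -> R) (Y0 : 'I_n -> 'I_s -> R) :
  (forall i k, (fun t => Y t i k) @ F --> Y0 i k) ->
  forall i j, (fun t => dist2 (Y t) i j) @ F --> dist2 Y0 i j.
Proof.
move=> hc i j; rewrite /dist2.
apply: (cvg_sum_ord (fun k t => (Y t i k - Y t j k) ^+ 2)) => k _.
rewrite expr2; apply: cvgM; exact: cvgB.
Qed.

End Tools2.

Section CvgW.
Variables (R : realType) (T : Type) (F : set_system T) (FF : Filter F).

Lemma cM (f g : T -> R) (a b : R) : f @ F --> a -> g @ F --> b ->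
  (fun t => f t * g t) @ F --> a * b.
Proof. by move=> hf hg; apply: cvgM. Qed.

Lemma cB (f g : T -> R) (a b : R) : f @ F --> a -> g @ F --> b ->
  (fun t => f t - g t) @ F --> a - b.
Proof. by move=> hf hg; apply: cvgB. Qed.

Lemma cC (c : R) : (fun _ : T => c) @ F --> c.
Proof. exact: cvg_cst. Qed.

Lemma ccomp (h : R -> R) (f : T -> R) (a : R) : {for a, continuous h} -> f @ F --> a ->
  (fun t => h (f t)) @ F --> h a.
Proof. by move=> hc hf; apply: continuous_cvg. Qed.

End CvgW.
Arguments ccomp [R T F FF] h [f a].

Section CvgF.
Variables (R : realType) (n s : nat) (p : 'I_n -> 'I_n -> R) (beta L : R -> R).
Hypothesis hn : (1 < n)%N.
Hypothesis hb0 : forall x : R, 0 <= x -> 0 < beta x.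
Hypothesis hbd : forall x : R, 0 <= x -> is_derive x 1 beta (beta x * L x).

Lemma cvg_Fn (T : Type) (F : set_system T) (FF : Filter F)
  (Y : T -> 'I_n -> 'I_s -> R) (Y0 : 'I_n -> 'I_s -> R) :
  (forall i k, (fun t => Y t i k) @ F --> Y0 i k) ->
  (fun t => Fn beta p (Y t)) @ F --> Fn beta p Y0.
Proof.
move=> hc; have hd := cvg_dist2 FF hc.
have hbc x : 0 <= x -> {for x, continuous beta} by move=> x0; exact: cont_of_derive (hbd x0).
rewrite /Fn.
apply: (cvg_sum_ord (fun i t => \sum_(j < n | j != i) p i j *
   (ln (Zs beta (Y t)) - ln (beta (dist2 (Y t) i j))))) => i _.
apply: (cvg_sum_ord (fun j t => p i j *
   (ln (Zs beta (Y t)) - ln (beta (dist2 (Y t) i j))))) => j _.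
apply: cM; first exact: cC.
apply: cB.
  apply: (ccomp (@ln R)); first exact: continuous_ln (Zpos hn hb0 _).
  rewrite /Zs.
  apply: (cvg_sum_ord (fun k t => \sum_(l < n | l != k) beta (dist2 (Y t) k l))) => k _.
  apply: (cvg_sum_ord (fun l t => beta (dist2 (Y t) k l))) => l _.
  by apply: (ccomp beta); [exact: hbc (dist2_ge0 _ _ _)|exact: hd].
apply: (ccomp (@ln R)); first exact: continuous_ln (hb0 (dist2_ge0 _ _ _)).
by apply: (ccomp beta); [exact: hbc (dist2_ge0 _ _ _)|exact: hd].
Qed.

End CvgF.


Set Implicit Arguments. Unset Strict Implicit.
Local Open Scope classical_set_scope.

Section Mono.
Variables (R : realType) (n s : nat) (p : 'I_n -> 'I_n -> R) (beta L : R -> R).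
Hypothesis hn : (1 < n)%N.
Hypothesis hb0 : forall x : R, 0 <= x -> 0 < beta x.
Hypothesis hbd : forall x : R, 0 <= x -> is_derive x 1 beta (beta x * L x).
Hypothesis hp : prob_on_pairs p.
Variables (Y0 : 'I_n -> 'I_s -> R) (Y : R -> 'I_n -> 'I_s -> R).
Hypothesis sol : is_flow_solution beta p Y0 Y.

Lemma F_mono (a b : R) : 0 < a -> a <= b -> Fn beta p (Y b) <= Fn beta p (Y a).
Proof.
case: sol => _ [_ hY] a0 ab.
have := mvt_le a0 ab
  (fun t h1 _ => d_F hn hb0 hbd hY (lt_le_trans a0 h1))
  (fun t _ _ => dF_le0 hn hb0 hbd hp Y t).
by rewrite mul0r subr_le0.
Qed.

Lemma F_le0 (t : R) : 0 <= t -> Fn beta p (Y t) <= Fn beta p Y0.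
Proof.
case: (sol) => h0 [hlim _] t0.
have [<-|tpos] := eqVneq 0 t.
  have -> : Y 0 = Y0 by apply: funext => i; apply: funext => k; exact: h0.
  exact: lexx.
have tp : 0 < t by rewrite lt_def eq_sym tpos t0.
have cv := @cvg_Fn R n s p beta L hn hb0 hbd R ((0:R)^'+) (at_right_proper_filter (0:R)) Y Y0 hlim.
move: (cv) => /cvg_lim <- //.
apply: limr_ge; first by apply/cvg_ex; eexists; exact: cv.
near=> u; apply: F_mono.
  by near: u; exact: nbhs_right_gt.
by near: u; exact: nbhs_right_le.
Unshelve. all: by end_near.
Qed.

End Mono.


Set Implicit Arguments. Unset Strict Implicit.

Lemma Pinv_ge0 (R : realType) n (p : 'I_n -> 'I_n -> R) : prob_on_pairs p -> 0 <= Pinv p.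
Proof.
case=> hp0 _; apply: sumr_ge0 => i _; apply: sumr_ge0 => j ji.
by rewrite invr_ge0; apply/ltW/hp0; rewrite eq_sym.
Qed.

Lemma part2 (R : realType) (n s : nat) (p : 'I_n -> 'I_n -> R) (Y0 : 'I_n -> 'I_s -> R) :
  (s.+1 < n)%N -> prob_on_pairs p ->
  forall Y : R -> 'I_n -> 'I_s -> R, is_flow_solution (@beta_g R) p Y0 Y ->
  exists C : R, forall t : R, 0 <= t -> diam (Y t) <= C.
Proof.
move=> hs hp Y sol.
have hn : (1 < n)%N by lia.
have hb0 : forall x : R, 0 <= x -> 0 < beta_g x by move=> x _; exact: expR_gt0.
have hbd : forall x : R, 0 <= x -> is_derive x 1 (@beta_g R) (beta_g x * (fun _ => -1) x).
  by move=> x _; exact: dbeta_g.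
pose K := `|Fn (@beta_g R) p Y0|.
pose M := K * Pinv p.
have M0 : 0 <= M by apply: mulr_ge0; [exact: normr_ge0|exact: Pinv_ge0].
exists (Num.sqrt (4 * M * (s.+1)%:R + M)) => t t0.
apply: diam_ub.
  by apply: addr_ge0 => //; apply: mulr_ge0 => //; apply: mulr_ge0.
apply: (@geom R n s (Y t) M hs M0) => a b k l ab kl.
have FnLe : Fn (@beta_g R) p (Y t) <= K.
  exact: le_trans (F_le0 hn hb0 hbd hp sol t0) (ler_norm _).
have := pair_bound hn hb0 hp FnLe (a := a) (b := b) (k := k) (l := l).
rewrite eq_sym ab eq_sym kl => /(_ isT isT).
by rewrite /beta_g !expRK -/M; lra.
Qed.

Lemma tsne_static (R : realType) n s (p : 'I_n -> 'I_n -> R) :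
  (1 < n)%N -> prob_on_pairs p -> forall (y : 'I_n -> 'I_s -> R) (E : R), 0 < E ->
  (forall a b k l, b != a -> l != k -> 1 + dist2 y a b <= (1 + dist2 y k l) * E) ->
  Vs y * (\sum_i \sum_j aa (@beta_t R) (fun x => - beta_t x) p y i j * dist2 y i j)
    <= n%:R ^+ 2 * E.
Proof.
move=> hn hp y E E0 cmp.
have hb0 : forall x : R, 0 <= x -> 0 < beta_t x.
  by move=> x x0; rewrite /beta_t invr_gt0; lra.
case: (hp) => hp0 [hps hp1].
pose w i j := beta_t (dist2 y i j).
have d0 i j := dist2_ge0 y i j.
have w0 i j : 0 < w i j by exact: hb0.
have wd i j : w i j * (1 + dist2 y i j) = 1.
  rewrite /w /beta_t mulVf // gt_eqF //; have := d0 i j; lra.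
have V0 : 0 <= Vs y by apply: sumr_ge0 => i _; apply: sumr_ge0 => j _.
pose S := \sum_i \sum_j aa (@beta_t R) (fun x => - beta_t x) p y i j * dist2 y i j.
have S1 : S = \sum_i \sum_(j < n | j != i) (p i j * w i j - p i j) +
              \sum_i \sum_(j < n | j != i) (qq (@beta_t R) y i j - qq (@beta_t R) y i j * w i j).
  rewrite /S -big_split /=; apply: eq_bigr => i _.
  rewrite (bigD1 i) //= dist2xx mulr0 add0r -big_split /=; apply: eq_bigr => j _.
  have h := wd i j; rewrite /w in h; rewrite /aa /w.
  move: h; set b := beta_t (dist2 y i j); set d := dist2 y i j => h.
  have bd : b * d = 1 - b by rewrite mulrDr mulr1 in h; lra.
  transitivity ((p i j - qq (@beta_t R) y i j) * (b * d) * -1); first ring.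
  rewrite bd; ring.
have S2 : S <= \sum_i \sum_(j < n | j != i) p i j * w i j.
  have e1 : \sum_i \sum_(j < n | j != i) (p i j * w i j - p i j) =
     \sum_i \sum_(j < n | j != i) p i j * w i j - 1.
    by under eq_bigr => i _ do rewrite sumrB; rewrite sumrB hp1.
  have e2 : \sum_i \sum_(j < n | j != i) (qq (@beta_t R) y i j - qq (@beta_t R) y i j * w i j) =
     1 - \sum_i \sum_(j < n | j != i) qq (@beta_t R) y i j * w i j.
    by under eq_bigr => i _ do rewrite sumrB; rewrite sumrB (qq_sum hn hb0).
  rewrite S1 e1 e2.
  have : 0 <= \sum_i \sum_(j < n | j != i) qq (@beta_t R) y i j * w i j.
    apply: sumr_ge0 => i _; apply: sumr_ge0 => j _; apply: mulr_ge0; last exact: ltW.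
    by rewrite /qq; apply: divr_ge0; [exact/ltW/hb0|exact/ltW/(Zpos hn hb0)].
  lra.
have wV i j : j != i -> w i j * Vs y <= n%:R ^+ 2 * E.
  move=> ji; rewrite /Vs mulr_sumr.
  have -> : n%:R ^+ 2 * E = \sum_(a < n) \sum_(b < n) E.
    by rewrite sumr_const card_ord sumr_const card_ord -mulrnA -mulr_natl; ring.
  apply: ler_sum => a _; rewrite mulr_sumr; apply: ler_sum => b _.
  have [->|ba] := eqVneq a b; first by rewrite dist2xx mulr0; exact: ltW.
  have h := cmp a b i j (negbT (negbTE (introN eqP (fun h => (negP ba) (introT eqP (esym h)))))) ji.
  have h2 : dist2 y a b <= (1 + dist2 y i j) * E by have := d0 a b; lra.
  apply: le_trans (ler_wpM2l (ltW (w0 i j)) h2) _.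
  by rewrite mulrA wd mul1r.
apply: le_trans (ler_wpM2l V0 S2) _.
rewrite mulr_sumr.
apply: le_trans (ler_sum (I := 'I_n) (G := fun i => \sum_(j < n | j != i) p i j * (n%:R ^+ 2 * E)) _ _) _.
  move=> i _; rewrite mulr_sumr; apply: ler_sum => j ji.
  rewrite mulrCA; apply: ler_wpM2l; first by apply/ltW/hp0; rewrite eq_sym.
  by rewrite mulrC; exact: wV.
under eq_bigr => i _ do rewrite -mulr_suml.
by rewrite -mulr_suml hp1 mul1r.
Qed.

Lemma dist2_le_Vs (R : realType) n s (y : 'I_n -> 'I_s -> R) i j : dist2 y i j <= Vs y.
Proof.
rewrite /Vs (bigD1 i) //= (bigD1 j) //= -addrA lerDl.
apply: addr_ge0; first by apply: sumr_ge0 => k _; exact: dist2_ge0.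
by apply: sumr_ge0 => a _; apply: sumr_ge0 => b _; exact: dist2_ge0.
Qed.

Lemma part1 (R : realType) (n s : nat) (p : 'I_n -> 'I_n -> R) (Y0 : 'I_n -> 'I_s -> R) :
  (1 < n)%N -> prob_on_pairs p ->
  forall Y : R -> 'I_n -> 'I_s -> R, is_flow_solution (@beta_t R) p Y0 Y ->
  exists C : R, forall t : R, 1 <= t -> diam (Y t) <= C * t `^ (4^-1).
Proof.
move=> hn hp Y sol.
have hb0 : forall x : R, 0 <= x -> 0 < beta_t x.
  by move=> x x0; rewrite /beta_t invr_gt0; lra.
have hbd : forall x : R, 0 <= x ->
    is_derive x 1 (@beta_t R) (beta_t x * (fun x => - beta_t x) x).
  by move=> x x0; exact: dbeta_t.
case: (sol) => _ [_ hY].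
pose M := `|Fn (@beta_t R) p (Y 1)| * Pinv p.
pose E := expR M.
have E0 : 0 < E := expR_gt0 M.
have cmp : forall u : R, 1 <= u -> forall a b k l, b != a -> l != k ->
    1 + dist2 (Y u) a b <= (1 + dist2 (Y u) k l) * E.
  move=> u u1 a b k l ba lk.
  have FnLe : Fn (@beta_t R) p (Y u) <= `|Fn (@beta_t R) p (Y 1)|.
    exact: le_trans (F_mono hn hb0 hbd hp sol ltr01 u1) (ler_norm _).
  have := pair_bound hn hb0 hp FnLe ba lk.
  have pa : 0 < 1 + dist2 (Y u) a b by have := dist2_ge0 (Y u) a b; lra.
  have pk : 0 < 1 + dist2 (Y u) k l by have := dist2_ge0 (Y u) k l; lra.
  rewrite /beta_t !lnV ?posrE // -/M => h.
  have h2 : ln (1 + dist2 (Y u) a b) <= ln (1 + dist2 (Y u) k l) + M by lra.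
  by move: h2; rewrite -ler_expR expRD !lnK ?posrE.
pose Kc := 16 * n%:R * (n%:R ^+ 2 * E).
have Kc0 : 0 <= Kc.
  by apply: mulr_ge0; [apply: mulr_ge0|apply: mulr_ge0 => //; exact: ltW].
pose V1 := Vs (Y 1).
have key : forall t : R, 1 <= t -> Vs (Y t) ^+ 2 - V1 ^+ 2 <= Kc * (t - 1).
  move=> t t1.
  apply: (mvt_le (f := fun u => Vs (Y u) ^+ 2)
     (df := fun u => 2 * Vs (Y u) * dV p (@beta_t R) Y u) ltr01 t1).
    move=> u u1 _; apply: dsq; apply: (d_V hY); exact: lt_le_trans ltr01 u1.
  move=> u u1 _.
  rewrite (dV_eq hb0 hbd hp Y u).
  have hS := tsne_static hn hp E0 (cmp u u1).
  have V0 : 0 <= Vs (Y u).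
    by apply: sumr_ge0 => i _; apply: sumr_ge0 => j _; exact: dist2_ge0.
  move: hS; set S := \sum_i \sum_j _ => hS.
  rewrite /Kc.
  have -> : 2 * Vs (Y u) * (8 * n%:R * S) = 16 * n%:R * (Vs (Y u) * S) by ring.
  by apply: ler_wpM2l => //; apply: mulr_ge0.
exists (1 + V1 ^+ 2 + Kc) => t t1.
set C := 1 + V1 ^+ 2 + Kc.
have t0 : 0 < t by exact: lt_le_trans ltr01 t1.
have Vt0 : 0 <= Vs (Y t).
  by apply: sumr_ge0 => i _; apply: sumr_ge0 => j _; exact: dist2_ge0.
have hd : diam (Y t) <= Num.sqrt (Vs (Y t)).
  by apply: diam_ub => // i j; exact: dist2_le_Vs.
set r := t `^ 4^-1.
have r0 : 0 <= r by exact: powR_ge0.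
have r4 : r ^+ 4 = t.
  rewrite /r -powR_mulrn ?powR_ge0 // -powRrM mulVf ?powRr1 //; first exact: ltW.
have C1 : 1 <= C by rewrite /C; have := sqr_ge0 V1; lra.
have hdia0 := diam_ge0 (Y t).
have C0 : 0 <= C * r by apply: mulr_ge0 => //; lra.
rewrite -(ler_pXn2r (_ : (0 < 4)%N)) ?nnegrE //.
rewrite exprMn r4.
have s4 : diam (Y t) ^+ 4 <= Vs (Y t) ^+ 2.
  have -> : Vs (Y t) ^+ 2 = Num.sqrt (Vs (Y t)) ^+ 4.
    by rewrite (exprM _ 2 2) sqr_sqrtr.
  by rewrite ler_pXn2r ?nnegrE ?sqrtr_ge0.
have k1 := key t t1.
have C4 : C <= C ^+ 4.
  have c3 : 1 <= C ^+ 3 by rewrite exprn_ege1.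
  rewrite exprS; nra.
have hV1 : 0 <= V1 ^+ 2 by exact: sqr_ge0.
have : Vs (Y t) ^+ 2 <= C * t by rewrite /C; nra.
move=> h; apply: le_trans s4 _; apply: le_trans h _.
by apply: ler_wpM2r; [exact: ltW|].
Qed.


Local Close Scope classical_set_scope.
Unset Implicit Arguments.
Set Strict Implicit.

Theorem theorem1p1 (R : realType) (n s : nat) (p : 'I_n -> 'I_n -> R)
  (Y0 : 'I_n -> 'I_s -> R) :
  (1 <= s)%N -> (s.+1 < n)%N -> prob_on_pairs p ->
  (forall Y : R -> 'I_n -> 'I_s -> R,
     is_flow_solution (@beta_t R) p Y0 Y ->
     exists C : R, forall t : R, 1 <= t -> diam (Y t) <= C * t `^ (4^-1)) /\
  (forall Y : R -> 'I_n -> 'I_s -> R,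
     is_flow_solution (@beta_g R) p Y0 Y ->
     exists C : R, forall t : R, 0 <= t -> diam (Y t) <= C).
Proof.
move=> hs1 hsn hp.
have hn : (1 < n)%N by lia.
split.
  by move=> Y sol; apply: (part1 hn hp sol).
by move=> Y sol; apply: (part2 hsn hp sol).
Qed.
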